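(* Let $T<\infty$ and define $(V_t,S_t)_{t\le T}$ and $J_t$ (on $\{t<T_e\}$) by the backward recursion: $V_T=G_T$, $S_T=1_{D_T}$, and for $t=T-1,\dots,0$, $J_t=E[S_{t+1}V_{t+1}\mid\mathcal{F}_t]/E[S_{t+1}\mid\mathcal{F}_t]$ on $\{t<T_e\}$, with $V_t=G_t,S_t=1$ on $\{t<T_e, G_t\ge J_t\}$; $V_t=J_t, S_t=E[S_{t+1}\mid\mathcal{F}_t]$ on $\{t<T_e,G_t<J_t\}$; $V_t=G_t, S_t=1_{D_t}$ on $\{t\ge T_e\}$. Let $\theta_t=1_{\{G_t\ge V_t\}}$. Then $\theta$ is admissible, \[ J_t=J_t(\theta)\quad\text{and}\quad E[S_{t+1}\mid\mathcal{F}_t]=P(\mathcal{L}_t\theta\lhd\sigma\mid\mathcal{F}_t)\quad\text{on }\{t<T_e\}, \] and for all $t\le T$, \[ S_t=\begin{cases}P(\mathcal{L}_t\theta\lhd\sigma\mid\mathcal{F}_t)&\text{on } D_t\cap\{\theta_t=0\},\\ 1&\text{on } D_t\cap\{\theta_t=1\},\\ 0 & \text{on } D_t^c.\end{cases} \]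
   Context: Let $T\in\mathbb{N}$ and $\mathbb{T}=\{0,1,\dots,T\}$. Let $(\Omega,\mathcal{F},P)$ be a probability space with a filtration $(\mathcal{F}_t)_{t\le T}$, $\mathcal{F}_0$ trivial. Let $\sigma$ be a stopping time with values in $\{0,1,2,\dots\}\cup\{\infty\}$ and $P(\sigma>0)=1$; set $D_t=\{t<\sigma\}$. Let $G=(G_t)_{t\le T}$ be an adapted payoff process; on $D_t^c$ one sets $G_t=\Delta$, an auxiliary symbol with the convention $0\cdot\Delta=0$. Standing assumption: $E[\sup_{t\le T}|G_t|1_{D_t}]<\infty$. For $s,t\in[0,\infty]$ write $s\lhd t$ iff $s<t$ or $t=\infty$. Convention: $\inf\emptyset=\infty$. The effective horizon is $T_e=T\wedge\inf\{0\le t<T: P(D_{t+1}\mid\mathcal{F}_t)=0\}$. A stopping policy is a $\{0,1\}$-valued adapted process $\theta=(\theta_t)_{t\in\mathbb{T}}$, and $\mathcal{L}_t\theta=\inf\{s>t:\theta_s=1\}$. $\theta$ is admissible if $P(\mathcal{L}_t\theta\lhd\sigma\mid\mathcal{F}_t)>0$ on $\{t<T_e\}$ and $\theta_t=1$ on $\{t\ge T_e\}$. For admissible $\theta$, on $\{t<T_e\}$, $J_t(\theta)=E[G_{\mathcal{L}_t\theta}1_{\{\mathcal{L}_t\theta\lhd\sigma\}}\mid\mathcal{F}_t]/P(\mathcal{L}_t\theta\lhd\sigma\mid\mathcal{F}_t)$. *)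

(* Defs.v *)
From HB Require Import structures.
From mathcomp Require Import all_boot all_order all_algebra.
From mathcomp Require Import all_classical all_reals all_analysis.
Set Implicit Arguments. Unset Strict Implicit. Unset Printing Implicit Defensive.
Import Order.TTheory GRing.Theory Num.Theory.
Local Open Scope classical_set_scope.
Local Open Scope ring_scope.

(** Times in {0,1,2,...} ∪ {∞}: [Some n] is n, [None] is ∞. *)

Definition lt_opt (t : nat) (s : option nat) : bool :=
  match s with None => true | Some b => (t < b)%N end.

Definition lhd (s u : option nat) : bool :=
  match u with
  | None => true
  | Some b => match s with Some a => (a < b)%N | None => false end
  end.

Definition Dset (Omega : Type) (sigma : Omega -> option nat) (t : nat) : set Omega :=
  [set w | lt_opt t (sigma w)].

(** Payoff with the cemetery value Δ, encoded as [None]. *)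
Definition Gv (Omega : Type) (R : Type) (G : nat -> Omega -> R)
  (sigma : Omega -> option nat) (t : nat) (w : Omega) : option R :=
  if lt_opt t (sigma w) then Some (G t w) else None.

Definition geD (R : realType) (a b : option R) : bool :=
  match a, b with
  | Some x, Some y => (y <= x)%R
  | None, None => true
  | None, Some _ => false
  | Some _, None => true
  end.

(** s * v with the convention 0 * Δ = 0 (Δ only ever gets multiplied by 0). *)
Definition mulD (R : realType) (s : R) (v : option R) : R :=
  match v with None => 0 | Some x => s * x end.

Definition is_cexp (R : realType) (d : measure_display) (Omega : measurableType d)
  (P : probability Omega R) (G : set (set Omega)) (X Y : Omega -> R) : Prop :=
  [/\ P.-integrable setT (EFin \o X),
      P.-integrable setT (EFin \o Y),
      (forall B : set R, measurable B -> G (Y @^-1` B)) &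
      (forall A, G A -> (\int[P]_(w in A) (Y w)%:E = \int[P]_(w in A) (X w)%:E)%E)].

Definition filtration d (Omega : measurableType d) (F : nat -> set (set Omega)) : Prop :=
  [/\ (forall t, sigma_algebra setT (F t)),
      (forall t, F t `<=` measurable) &
      (forall s t, (s <= t)%N -> F s `<=` F t)].

Definition stopping_time (Omega : Type) (F : nat -> set (set Omega))
  (sigma : Omega -> option nat) : Prop :=
  forall t, F t (~` Dset sigma t).

(** T_e = T ∧ inf{0 <= t < T : p_t = 0}, p_t a version of P(D_{t+1} | F_t). *)
Definition Te (Omega : Type) (R : realType) (T : nat) (p : nat -> Omega -> R)
  (w : Omega) : nat :=
  find (fun t => p t w == 0) (iota 0 T).

(** L_t θ = inf{ s > t : θ_s = 1 }, s ranging over {0,...,T}; None = ∞. *)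
Definition Lt (Omega : Type) (T : nat) (theta : nat -> Omega -> bool) (t : nat)
  (w : Omega) : option nat :=
  let k := find (fun s => theta s w) (iota t.+1 (T - t)) in
  if (k < T - t)%N then Some (t.+1 + k)%N else None.

Definition admissible (R : realType) d (Omega : measurableType d)
  (P : probability Omega R) (F : nat -> set (set Omega)) (sigma : Omega -> option nat)
  (T : nat) (Te : Omega -> nat) (theta : nat -> Omega -> bool) : Prop :=
  [/\ (forall t, (t <= T)%N -> F t [set w | theta t w]),
      (forall t, (t < T)%N -> exists q : Omega -> R,
          is_cexp P (F t) (indic [set w | lhd (Lt T theta t w) (sigma w)]) q /\
          {ae P, forall w, (t < Te w)%N -> 0 < q w}) &
      (forall t w, (t <= T)%N -> (Te w <= t)%N -> theta t w)].

(** G_{L_t θ} 1_{L_t θ ◁ σ} (set to 0 when L_t θ = ∞, which only happens for t = T). *)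
Definition stopped_payoff (Omega : Type) (R : realType) (G : nat -> Omega -> R)
  (sigma : Omega -> option nat) (T : nat) (theta : nat -> Omega -> bool) (t : nat)
  (w : Omega) : R :=
  match Lt T theta t w with
  | Some s => if lhd (Some s) (sigma w) then G s w else 0
  | None => 0
  end.

(* Main.v *)
Require Import Defs.
From HB Require Import structures.
From mathcomp Require Import all_boot all_order all_algebra.
From mathcomp Require Import all_classical all_reals all_analysis.
From mathcomp Require Import measurable_realfun.
Import Order.TTheory GRing.Theory Num.Theory.
Local Open Scope classical_set_scope.
Local Open Scope ring_scope.

Section Gen.
Context (R : realType) (d : measure_display) (Omega : measurableType d)
  (P : probability Omega R).

Lemma ae_null (A : set Omega) : measurable A -> {ae P, forall w, ~ A w} -> P A = 0%E.
Proof.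
move=> mA [N [mN N0 sub]].
apply/eqP; rewrite -measure_le0 -N0 le_measure ?inE //.
move=> w Aw; apply: sub => /=; exact.
Qed.

Lemma L0 (Z : set Omega) (f : Omega -> R) : measurable Z -> measurable_fun setT f ->
  {ae P, forall w, Z w -> 0 <= f w} ->
  (\int[P]_(w in Z) (f w)%:E <= 0)%E -> {ae P, forall w, Z w -> f w = 0}.
Proof.
move=> mZ mf f0 If.
have mfZ : measurable_fun Z (EFin \o f : Omega -> \bar R).
  by apply: measurableT_comp => //; exact: measurable_funS mf.
have e : (\int[P]_(w in Z) `|(EFin \o f) w| = \int[P]_(w in Z) (f w)%:E)%E.
  apply: ae_eq_integral => //.
    apply: measurableT_comp => //; exact: measurableT_comp.
  apply: filterS f0 => w h Zw /=; rewrite ger0_norm //; exact: h.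
have : (\int[P]_(w in Z) `|(EFin \o f) w| = 0)%E.
  by apply/le_anti/andP; split; [rewrite e|apply: integral_ge0 => w _; exact: abse_ge0].
move/(ae_eq_integral_abs P mZ mfZ).
by apply: filterS => w h Zw; have := h Zw => /= -[].
Qed.

Lemma ae_nonneg (G : set (set Omega)) (Y : Omega -> R) :
  G `<=` measurable -> measurable_fun setT Y ->
  (forall B, measurable B -> G (Y @^-1` B)) ->
  (forall A, G A -> (0 <= \int[P]_(w in A) (Y w)%:E)%E) ->
  {ae P, forall w, 0 <= Y w}.
Proof.
move=> GM mY GY IA.
pose Z := Y @^-1` `]-oo, 0[.
have GZ : G Z by apply: GY.
have mZ : measurable Z by apply: GM.
have : {ae P, forall w, Z w -> - Y w = 0}.
  apply: L0 => //.
    exact: measurableT_comp.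
  apply: aeW => w; rewrite /Z /= in_itv /= => h; rewrite oppr_ge0; exact: ltW.
  have h1 := IA Z GZ.
  have : (\int[P]_(w in Z) - ((- Y w)%:E) = - \int[P]_(w in Z) (- Y w)%:E)%E.
    apply: integral_ge0N => w; rewrite /Z /= in_itv /= => h.
    by rewrite lee_fin oppr_ge0; exact: ltW.
  under eq_integral do rewrite EFinN oppeK.
  move=> e; rewrite -[X in (X <= _)%E]oppeK -e leeNl oppe0; exact: h1.
apply: filterS => w h; rewrite leNgt; apply/negP => Yw.
have Zw : Z w by rewrite /Z /= in_itv.
by move: (h Zw) => /eqP; rewrite oppr_eq0 => /eqP Y0; rewrite Y0 ltxx in Yw.
Qed.


Definition gT (G : set (set Omega)) := g_sigma_algebraType G.

Lemma gT_meas (G : set (set Omega)) (A : set Omega) : sigma_algebra setT G ->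
  measurable (A : set (gT G)) <-> G A.
Proof. by move=> HG; rewrite /gT measurable_g_measurableTypeE. Qed.

Lemma Gm_gT (G : set (set Omega)) (f : Omega -> R) : sigma_algebra setT G ->
  (forall B, measurable B -> G (f @^-1` B)) -> measurable_fun setT (f : gT G -> R).
Proof. by move=> HG h _ B mB; rewrite setTI gT_meas //; exact: h. Qed.

Lemma gT_Gm (G : set (set Omega)) (f : Omega -> R) : sigma_algebra setT G ->
  measurable_fun setT (f : gT G -> R) -> (forall B, measurable B -> G (f @^-1` B)).
Proof. by move=> HG h B mB; rewrite -gT_meas // -[_ @^-1` _]setTI; exact: h. Qed.

Lemma int_meas (f : Omega -> R) : P.-integrable setT (EFin \o f) -> measurable_fun setT f.
Proof. by move/measurable_int/measurable_EFinP. Qed.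

Lemma int_diff (A : set Omega) (Y1 Y2 : Omega -> R) : measurable A ->
  P.-integrable setT (EFin \o Y1) -> P.-integrable setT (EFin \o Y2) ->
  (\int[P]_(w in A) (Y1 w - Y2 w)%:E = \int[P]_(w in A) (Y1 w)%:E - \int[P]_(w in A) (Y2 w)%:E)%E.
Proof.
move=> mA i1 i2; under eq_integral do rewrite EFinB.
by apply: integralB_EFin => //; [exact: (integrableS measurableT mA (@subsetT _ _) i1)|exact: (integrableS measurableT mA (@subsetT _ _) i2)].
Qed.

Lemma cexp_uniq (G : set (set Omega)) (X Y1 Y2 : Omega -> R) :
  sigma_algebra setT G -> G `<=` measurable ->
  is_cexp P G X Y1 -> is_cexp P G X Y2 -> {ae P, forall w, Y1 w = Y2 w}.
Proof.
move=> HG GM [iX i1 m1 e1] [_ i2 m2 e2].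
have key : forall (Ya Yb : Omega -> R), P.-integrable setT (EFin \o Ya) ->
   P.-integrable setT (EFin \o Yb) ->
   (forall B, measurable B -> G (Ya @^-1` B)) -> (forall B, measurable B -> G (Yb @^-1` B)) ->
   (forall A, G A -> \int[P]_(w in A) (Ya w)%:E = \int[P]_(w in A) (X w)%:E)%E ->
   (forall A, G A -> \int[P]_(w in A) (Yb w)%:E = \int[P]_(w in A) (X w)%:E)%E ->
   {ae P, forall w, 0 <= Ya w - Yb w}.
  move=> Ya Yb ia ib ma mb ea eb.
  apply: (@ae_nonneg G) => //.
  - by apply: measurable_funB; apply: int_meas.
  - apply: gT_Gm => //; apply: measurable_funB; exact: Gm_gT.
  - move=> A GA; rewrite int_diff //; last exact: GM.
    rewrite ea // eb // subee //; apply: integrable_fin_num; first exact: GM.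
    exact: (integrableS measurableT (GM _ GA) (@subsetT _ _) iX).
have h1 := key Y1 Y2 i1 i2 m1 m2 e1 e2.
have h2 := key Y2 Y1 i2 i1 m2 m1 e2 e1.
apply: filterS2 h1 h2 => w a b; apply/eqP; rewrite eq_le -subr_ge0 b /= -subr_ge0 a //.
Qed.


Lemma inv_meas : measurable_fun setT (@GRing.inv R).
Proof.
have -> : [set: R] = [set 0] `|` [set x : R | x != 0].
  by apply/seteqP; split => x //= _; case: (eqVneq x 0) => h; [left|right].
apply/measurable_funU => //.
  by apply: open_measurable; exact: open_neq.
split; first exact: measurable_fun_set1.
apply: open_continuous_measurable_fun; first exact: open_neq.
by move=> x; rewrite inE /= => x0; exact: inv_continuous.
Qed.

Lemma split_int (A B : set Omega) (f g : Omega -> \bar R) : measurable A -> measurable B ->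
  measurable_fun A f -> measurable_fun A g ->
  (\int[P]_(w in A `&` B) f w = \int[P]_(w in A `&` B) g w)%E ->
  (\int[P]_(w in A `&` ~` B) f w = \int[P]_(w in A `&` ~` B) g w)%E ->
  (\int[P]_(w in A) f w = \int[P]_(w in A) g w)%E.
Proof.
move=> mA mB mf mg e1 e2.
have eA : A = (A `&` B) `|` (A `&` ~` B) by rewrite -setDE setUIDK.
have mAB : measurable (A `&` B) by exact: measurableI.
have mAB' : measurable (A `&` ~` B) by apply: measurableI => //; exact: measurableC.
have dj : [disjoint A `&` B & A `&` ~` B].
  by apply/disj_set2P; apply/seteqP; split => x // [[_ ?] [_ ?]].
rewrite eA integral_setU // ?integral_setU // -?eA // e1 e2 //.
Qed.

Lemma int_le0 (Z : set Omega) (f : Omega -> R) :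
  (forall w, Z w -> f w <= 0) -> (\int[P]_(w in Z) (f w)%:E <= 0)%E.
Proof.
move=> h.
have : (\int[P]_(w in Z) - ((- f w)%:E) = - \int[P]_(w in Z) (- f w)%:E)%E.
  by apply: integral_ge0N => w Zw; rewrite lee_fin oppr_ge0; exact: h.
under eq_integral do rewrite EFinN oppeK.
move=> ->; rewrite leeNl oppe0; apply: integral_ge0 => w Zw.
by rewrite lee_fin oppr_ge0; exact: h.
Qed.

End Gen.

Lemma indic_iff (R : realType) (T : Type) (A B : set T) (w : T) :
  (A w <-> B w) -> (indic A w : R) = indic B w.
Proof.
move=> h; rewrite /indic; case: (boolP (w \in A)) => wA; case: (boolP (w \in B)) => wB //.
- by move: wB; rewrite notin_setE; move: wA; rewrite inE => /h.
- by move: wA; rewrite notin_setE; move: wB; rewrite inE => /h.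
Qed.

Arguments gT_meas {d Omega G} A.
Arguments gT_Gm {R d Omega G f}.
Arguments Gm_gT {R d Omega G f}.
Arguments L0 {R d Omega} P {Z f}.
Arguments ae_nonneg {R d Omega} P {G Y}.
Arguments cexp_uniq {R d Omega P G X Y1 Y2}.
Arguments split_int {R d Omega} P {A B f g}.
Arguments int_meas {R d Omega P f}.
Arguments ae_null {R d Omega} P {A}.
Arguments int_diff {R d Omega P A Y1 Y2}.

Lemma geD_refl (R : realType) (x : option R) : geD x x.
Proof. by case: x => //= r; rewrite lexx. Qed.

Section Main.
Context (R : realType) (d : measure_display) (Omega : measurableType d)
  (P : probability Omega R) (F : nat -> set (set Omega)) (T : nat)
  (sigma : Omega -> option nat) (G : nat -> Omega -> R)
  (p : nat -> Omega -> R) (ES ESV J Sp : nat -> Omega -> R)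
  (V : nat -> Omega -> option R).
Context (HF : filtration F) (Hst : stopping_time F sigma)
  (HGm : forall t (B : set R), (t <= T)%N -> measurable B ->
     F t (Dset sigma t `&` G t @^-1` B))
  (Hint : (\int[P]_w (\big[Num.max/0]_(t < T.+1) (`|G t w| * indic (Dset sigma t) w))%:E
     < +oo)%E)
  (Hp : forall t, (t < T)%N -> is_cexp P (F t) (indic (Dset sigma t.+1)) (p t))
  (HES : forall t, (t < T)%N -> is_cexp P (F t) (Sp t.+1) (ES t))
  (HESV : forall t, (t < T)%N ->
     is_cexp P (F t) (fun w => mulD (Sp t.+1 w) (V t.+1 w)) (ESV t))
  (Hrec : forall t w, (t <= T)%N ->
     if (t < Te T p w)%N then
       J t w = ESV t w / ES t w /\
       (if geD (Gv G sigma t w) (Some (J t w))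
        then V t w = Gv G sigma t w /\ Sp t w = 1
        else V t w = Some (J t w) /\ Sp t w = ES t w)
     else V t w = Gv G sigma t w /\ Sp t w = indic (Dset sigma t) w).

Definition th t w := geD (Gv G sigma t w) (V t w).
Definition te w := Te T p w.
Definition Ls t := [set w | lhd (Lt T th t w) (sigma w)].
Definition Dt t := Dset sigma t.

Lemma te_le w : (te w <= T)%N.
Proof. by rewrite /te /Te; have := find_size (fun t => p t w == 0) (iota 0 T); rewrite size_iota. Qed.

Lemma te_char t w : (t < te w)%N <-> (t < T)%N /\ (forall s, (s <= t)%N -> p s w != 0).
Proof.
rewrite /te /Te; split.
  move=> h; split; first exact: (leq_trans h (te_le w)).
  move=> s st; have sf := leq_ltn_trans st h.
  have := before_find 0%N sf; rewrite nth_iota ?add0n; first by move=> ->.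
  exact: (leq_trans sf (te_le w)).
move=> [tT h]; rewrite ltnNge; apply/negP => ft.
have hs : has (fun t => p t w == 0) (iota 0 T).
  by rewrite has_find size_iota; exact: (leq_ltn_trans ft tT).
have := nth_find 0%N hs; rewrite nth_iota ?add0n.
  by move/eqP => h0; have := h _ ft; rewrite h0 eqxx.
by move: hs; rewrite has_find size_iota.
Qed.

Lemma th_ge t w : (t <= T)%N -> (te w <= t)%N -> th t w.
Proof.
move=> tT h; rewrite /th; have := Hrec t w tT; rewrite ltnNge h /= => -[-> _].
exact: geD_refl.
Qed.

Lemma thT w : th T w.
Proof. exact: th_ge (leqnn _) (te_le w). Qed.

Lemma th_lt t w : (t <= T)%N -> (t < te w)%N ->
  [/\ J t w = ESV t w / ES t w,
      th t w = geD (Gv G sigma t w) (Some (J t w)),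
      th t w -> V t w = Gv G sigma t w /\ Sp t w = 1 &
      ~~ th t w -> V t w = Some (J t w) /\ Sp t w = ES t w].
Proof.
move=> tT h; have := Hrec t w tT; rewrite h => -[eJ].
rewrite /th; case: ifP => g [-> ->]; split => //.
- by rewrite geD_refl.
- by rewrite geD_refl.
- by rewrite g.
Qed.

Lemma th_D t w : (t <= T)%N -> (t < te w)%N -> th t w -> Dt t w.
Proof.
move=> tT h; have [_ -> _ _] := th_lt t w tT h.
by rewrite /Gv /Dt /Dset /=; case: (lt_opt t (sigma w)).
Qed.

Lemma Lt_S t w : (t < T)%N ->
  Lt T th t w = if th t.+1 w then Some t.+1 else Lt T th t.+1 w.
Proof.
move=> tT; rewrite /Lt.
have e : (T - t = (T - t.+1).+1)%N by rewrite subnSK.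
rewrite e /= -/(iota t.+2 (T - t.+1)).
case: (th t.+1 w) => /=; first by rewrite addn0.
rewrite ltnS; case: ifP => //.
by rewrite addnS.
Qed.

Lemma Lt_T w : Lt T th T w = None.
Proof. by rewrite /Lt subnn. Qed.

Lemma Ls_S t w : (t < T)%N -> Ls t w <-> (if th t.+1 w then Dt t.+1 w else Ls t.+1 w).
Proof.
move=> tT; rewrite /Ls /= Lt_S //; case: (th t.+1 w) => //.
Qed.

Lemma SP_S t w : (t < T)%N ->
  stopped_payoff G sigma T th t w =
  if th t.+1 w then (if lt_opt t.+1 (sigma w) then G t.+1 w else 0)
  else stopped_payoff G sigma T th t.+1 w.
Proof.
move=> tT; rewrite {1}/stopped_payoff Lt_S //; case: (th t.+1 w) => //.
Qed.

Lemma Sp_S t w : (t < T)%N ->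
  Sp t.+1 w = if th t.+1 w then indic (Dt t.+1) w else ES t.+1 w.
Proof.
move=> tT; case: (ltnP t.+1 (te w)) => h.
  have [_ _ h1 h2] := th_lt t.+1 w tT h.
  case: ifP => t1.
    have Dw := th_D t.+1 w tT h t1.
    by rewrite (h1 t1).2 /indic; rewrite mem_set.
  by rewrite (h2 (negbT t1)).2.
rewrite th_ge //; have := Hrec t.+1 w tT; rewrite ltnNge h /= => -[_ ->] //.
Qed.

Lemma MV_S t w : (t < T)%N ->
  mulD (Sp t.+1 w) (V t.+1 w) =
  if th t.+1 w then (if lt_opt t.+1 (sigma w) then G t.+1 w else 0)
  else ES t.+1 w * (ESV t.+1 w / ES t.+1 w).
Proof.
move=> tT; case: (ltnP t.+1 (te w)) => h.
  have [eJ _ h1 h2] := th_lt t.+1 w tT h.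
  case: ifP => t1.
    have Dw := th_D t.+1 w tT h t1.
    have [-> ->] := h1 t1.
    by rewrite /Gv; move: Dw; rewrite /Dt /Dset /= => ->; rewrite /= mul1r.
  by have [-> ->] := h2 (negbT t1); rewrite /= eJ.
rewrite th_ge //; have := Hrec t.+1 w tT; rewrite ltnNge h /= => -[-> ->].
rewrite /Gv /indic /Dt /Dset; case: ifP => D1 /=.
  by rewrite mem_set // mul1r.
by [].
Qed.


Lemma down_ind (Q : nat -> Prop) : Q T -> (forall t, (t < T)%N -> Q t.+1 -> Q t) ->
  forall t, (t <= T)%N -> Q t.
Proof.
move=> QT QS t tT; have [k ek] : exists k, k = (T - t)%N by eexists.
elim: k t tT ek => [|k IH] t tT ek.
  by have -> : t = T by apply/eqP; rewrite eqn_leq tT /= -subn_eq0 -ek.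
have tT' : (t < T)%N by rewrite -subn_gt0 -ek.
apply: QS => //; apply: IH => //; by rewrite subnS -ek.
Qed.

Let Fsa t : sigma_algebra setT (F t). Proof. by case: HF. Qed.
Let Fm t A : F t A -> measurable A. Proof. by case: HF => _ h _; exact: h. Qed.
Let Finc s t A : (s <= t)%N -> F s A -> F t A. Proof. by move=> st; case: HF => _ _ h; exact: (h s t st A). Qed.

Local Notation gF t := (g_sigma_algebraType (F t)).

Let gFm t (A : set Omega) : measurable (A : set (gF t)) <-> F t A.
Proof. exact: (gT_meas A (Fsa t)). Qed.

Lemma D_F t : F t (Dt t).
Proof.
have := Hst t; rewrite -gFm => h; rewrite -gFm.
by rewrite -[Dt t]setCK; apply: measurableC.
Qed.

Lemma D_m t : measurable (Dt t).
Proof. exact: Fm (D_F t). Qed.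

Lemma te_F t : F t [set w | (t < te w)%N].
Proof.
elim: t => [|t IH].
  case: (ltnP 0 T) => T0.
    have -> : [set w | (0 < te w)%N] = p 0%N @^-1` [set x | x != 0].
      apply/seteqP; split => w /=.
        by move/te_char => [_ h]; exact: h.
      by move=> h; apply/te_char; split => // s; rewrite leqn0 => /eqP ->.
    by case: (Hp 0 T0) => _ _ h _; apply: h; apply: open_measurable; exact: open_neq.
  have -> : [set w | (0 < te w)%N] = set0.
    by apply/seteqP; split => w //= h; have := leq_trans h (te_le w); rewrite ltnNge T0.
  by rewrite -gFm.
case: (ltnP t.+1 T) => T0.
  have -> : [set w | (t.+1 < te w)%N] =
     [set w | (t < te w)%N] `&` p t.+1 @^-1` [set x | x != 0].
    apply/seteqP; split => w /=.
      move/te_char => [tT h]; split; last exact: h.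
      by apply/te_char; split; [exact: ltnW| move=> s st; apply: h; exact: leqW].
    move=> [/te_char [_ h1] h2]; apply/te_char; split => // s.
    by rewrite leq_eqVlt => /orP[/eqP ->|]; [exact: h2|exact: h1].
  rewrite -gFm; apply: measurableI; rewrite gFm.
    by apply: (Finc _ _ _ (leqnSn t)).
  by case: (Hp t.+1 T0) => _ _ h _; apply: h; apply: open_measurable; exact: open_neq.
have -> : [set w | (t.+1 < te w)%N] = set0.
  apply/seteqP; split => w //= h; have := te_le w.
  by move: (leq_trans h (te_le w)); rewrite leqNgt ltnS T0.
by rewrite -gFm.
Qed.

Let lesT t : (t < T)%N -> (t <= T)%N. Proof. exact: ltnW. Qed.

Lemma Gd_meas t : (t <= T)%N ->
  measurable_fun setT ((fun w => if lt_opt t (sigma w) then G t w else 0) : gF t -> R).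
Proof.
move=> tT; apply: measurable_fun_if => //.
- apply: (measurable_fun_bool true) => //.
  rewrite setTI; have -> : (fun w => lt_opt t (sigma w)) @^-1` [set true] = Dt t by [].
  by rewrite gFm; exact: D_F.
- move=> _ B mB; rewrite setTI.
  have -> : (fun w => lt_opt t (sigma w)) @^-1` [set true] = Dt t by [].
  by rewrite gFm; exact: HGm.
Qed.

Lemma gF_amb t (f : Omega -> R) : measurable_fun setT (f : gF t -> R) ->
  measurable_fun setT f.
Proof.
move=> h _ B mB; rewrite setTI; apply: (Fm t); apply: (gT_Gm (Fsa t)) => //.
Qed.

Lemma cexp_gF t (X Y : Omega -> R) : is_cexp P (F t) X Y -> measurable_fun setT (Y : gF t -> R).
Proof. by case=> _ _ h _; exact: (Gm_gT (Fsa t)). Qed.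

Lemma th_F t : (t <= T)%N -> F t [set w | th t w].
Proof.
move=> tT; case: (ltnP t T) => tT'; last first.
  have -> : t = T by apply/eqP; rewrite eqn_leq tT.
  have -> : [set w | th T w] = setT by apply/seteqP; split => w //= _; exact: thT.
  by rewrite -gFm.
pose Gd := (fun w => if lt_opt t (sigma w) then G t w else 0).
pose J' := (fun w => ESV t w * (ES t w)^-1).
have -> : [set w | th t w] = ~` [set w | (t < te w)%N] `|`
    ([set w | (t < te w)%N] `&` Dt t `&` ((fun w => J' w <= Gd w) @^-1` [set true])).
  apply/seteqP; split => w /=.
    case: (ltnP t (te w)) => h; last by move=> _; left.
    have [eJ -> _ _] := th_lt t w tT h.
    rewrite /Gv /Dt /Dset /= /Gd /J'; case: (lt_opt t (sigma w)) => //= g.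
    by right; split => //; rewrite -eJ.
  case=> [h|[[h Dw] g]]; first by apply: th_ge => //; rewrite leqNgt; exact/negP.
  have [eJ -> _ _] := th_lt t w tT h.
  move: Dw g; rewrite /Gv /Dt /Dset /= /Gd /J' => -> /=; by rewrite -eJ.
rewrite -gFm; apply: measurableU.
  by apply: measurableC; rewrite gFm; exact: te_F.
apply: measurableI; first apply: measurableI.
- by rewrite gFm; exact: te_F.
- by rewrite gFm; exact: D_F.
- rewrite -[_ @^-1` _]setTI; apply: measurable_fun_ler => //.
    apply: measurable_funM; first exact: (@cexp_gF t _ _ (HESV t tT')).
    by apply: measurableT_comp; [exact: inv_meas|exact: (@cexp_gF t _ _ (HES t tT'))].
  exact: Gd_meas.
Qed.

Lemma th_m t : (t <= T)%N -> measurable [set w | th t w].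
Proof. by move=> tT; apply: (Fm t); exact: th_F. Qed.

Lemma Ls_m t : (t <= T)%N -> measurable (Ls t).
Proof.
move: t; apply: (down_ind (fun t => measurable (Ls t))).
  have -> : Ls T = \bigcap_n Dt n.
    apply/seteqP; split => w; rewrite /Ls /= Lt_T /=.
      by case E: (sigma w) => //= _ n _; rewrite /Dt /Dset /= E.
    move=> h; case E: (sigma w) => [b|] //=.
    by have := h b I; rewrite /Dt /Dset /= E /= ltnn.
  by apply: bigcapT_measurable => n; exact: D_m.
move=> t tT mL.
have -> : Ls t = ([set w | th t.+1 w] `&` Dt t.+1) `|` (~` [set w | th t.+1 w] `&` Ls t.+1).
  apply/seteqP; split => w.
    move/(Ls_S t w tT); case: ifP => h; [by left|by right; split => //=; rewrite h].
  case=> [[/= h Dw]|[/= h Lw]]; apply/(Ls_S t w tT).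
    by rewrite h.
  by move/negP/negbTE: h => ->.
apply: measurableU; apply: measurableI => //.
- exact: th_m.
- exact: D_m.
- by apply: measurableC; exact: th_m.
Qed.

Lemma SP_m t : (t <= T)%N -> measurable_fun setT (stopped_payoff G sigma T th t).
Proof.
move: t; apply: (down_ind (fun t => measurable_fun setT (stopped_payoff G sigma T th t))).
  have -> : stopped_payoff G sigma T th T = cst 0.
    by apply/funext => w; rewrite /stopped_payoff Lt_T.
  exact: measurable_cst.
move=> t tT mS.
have -> : stopped_payoff G sigma T th t = fun w =>
    if th t.+1 w then (if lt_opt t.+1 (sigma w) then G t.+1 w else 0)
    else stopped_payoff G sigma T th t.+1 w.
  by apply/funext => w; rewrite SP_S.
apply: measurable_fun_ifT => //.
  apply: (measurable_fun_bool true); rewrite setTI; exact: th_m.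
by apply: (@gF_amb t.+1); exact: Gd_meas.
Qed.


Lemma Lt_le t w s : Lt T th t w = Some s -> (s <= T)%N.
Proof.
rewrite /Lt; case: ifP => // h [<-].
by rewrite addSn -ltn_subRL.
Qed.

Let term s w := `|G s w| * indic (Dset sigma s) w.
Let Mx w := \big[Num.max/0]_(s < T.+1) term s w.

Lemma term_m s : (s <= T)%N -> measurable_fun setT (term s).
Proof.
move=> sT.
have -> : term s = fun w => `|(if lt_opt s (sigma w) then G s w else 0)|.
  apply/funext => w; rewrite /term /indic /Dset.
  case: (boolP (w \in _)); rewrite ?inE /= => h.
    by rewrite h mulr1.
  by move: h; rewrite notin_setE /= => /negP/negbTE ->; rewrite mulr0 normr0.
apply: measurableT_comp; first exact: normr_measurable.
by apply: (@gF_amb s); exact: Gd_meas.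
Qed.

Lemma Mx_ge0 w : 0 <= Mx w.
Proof.
rewrite /Mx; apply: (big_ind (fun x : R => 0 <= x)) => //.
  by move=> x y hx hy; rewrite le_max hx.
by move=> i _; rewrite /term mulr_ge0 // /indic; case: (_ \in _).
Qed.

Lemma Mx_m : measurable_fun setT Mx.
Proof.
have -> : Mx = \big[(fun f g => f \max g)/(cst 0)]_(s < T.+1) term s.
  apply/funext => w; rewrite /Mx.
  elim/big_rec2: _ => //= i y f _ ->; by [].
apply: (big_ind (fun f : Omega -> R => measurable_fun setT f)).
- exact: measurable_cst.
- by move=> f g mf mg; exact: measurable_maxr.
- by move=> i _; apply: term_m; rewrite -ltnS.
Qed.

Lemma Mx_int : P.-integrable setT (EFin \o Mx).
Proof.
apply/integrableP; split; first exact/measurable_EFinP/Mx_m.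
have -> : (\int[P]_x `|(EFin \o Mx) x| = \int[P]_x (Mx x)%:E)%E.
  by apply: eq_integral => w _ /=; rewrite ger0_norm // Mx_ge0.
exact: Hint.
Qed.

Lemma SP_int t : (t <= T)%N -> P.-integrable setT (EFin \o stopped_payoff G sigma T th t).
Proof.
move=> tT; apply: le_integrable Mx_int => //.
  exact/measurable_EFinP/SP_m.
move=> w _ /=; rewrite lee_fin (ger0_norm (Mx_ge0 w)).
rewrite /stopped_payoff; case E: (Lt T th t w) => [s|]; last by rewrite normr0 Mx_ge0.
case: ifP => h; last by rewrite normr0 Mx_ge0.
have sT := Lt_le t w s E.
have -> : `|G s w| = term s w.
  rewrite /term /indic mem_set ?mulr1 //.
by have := le_bigmax 0 (fun i : 'I_T.+1 => term i w) (Ordinal (sT : (s < T.+1)%N)).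
Qed.

Lemma Ls_int t : (t <= T)%N -> P.-integrable setT (EFin \o indic (Ls t)).
Proof. move=> tT; exact: (integrable_indic P (Ls_m t tT)). Qed.


Definition QA t := forall A, F t A ->
  (\int[P]_(w in A) (indic (Ls t) w)%:E = \int[P]_(w in A) (ES t w)%:E)%E.
Definition QB t := forall A, F t A ->
  (\int[P]_(w in A) (stopped_payoff G sigma T th t w)%:E = \int[P]_(w in A) (ESV t w)%:E)%E.
Definition QC t := {ae P, forall w, (t < te w)%N -> 0 < ES t w}.
Definition QN t := {ae P, forall w, 0 <= ES t w}.

Let indic_ge0 (A : set Omega) w : 0 <= (indic A w : R).
Proof. by rewrite /indic; case: (_ \in _). Qed.

Let mS (A : set Omega) (f : Omega -> \bar R) : measurable_fun setT f -> measurable_fun A f.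
Proof. by move=> h; apply: measurable_funS h => //. Qed.

Lemma pge0 t : (t < T)%N -> {ae P, forall w, 0 <= p t w}.
Proof.
move=> tT; case: (Hp t tT) => iX iY mY eY.
apply: (ae_nonneg P (G := F t)) => //.
- by move=> A; exact: Fm.
- exact: int_meas iY.
- by move=> A FA; rewrite eY //; apply: integral_ge0 => w _; rewrite lee_fin.
Qed.

Lemma ppos t : (t < T)%N -> {ae P, forall w, (t < te w)%N -> 0 < p t w}.
Proof.
move=> tT; apply: filterS (pge0 t tT) => w h /te_char [_ hh].
by rewrite lt_neqAle eq_sym (hh t (leqnn t)).
Qed.

Lemma NL t (Z : set Omega) : (t < T)%N -> F t Z -> (forall w, Z w -> (t < te w)%N) ->
  P (Z `&` Dt t.+1) = 0%E -> {ae P, forall w, ~ Z w}.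
Proof.
move=> tT FZ Zte P0.
have mZ := Fm _ _ FZ.
case: (Hp t tT) => iX iY mY eY.
have h : {ae P, forall w, Z w -> p t w = 0}.
  apply: (L0 P) => //.
  - exact: int_meas iY.
  - by apply: filterS (pge0 t tT) => w hw _; exact: hw.
  - rewrite eY // integral_indic //; last exact: D_m.
    have -> : Dset sigma t.+1 `&` Z = Z `&` Dt t.+1 by rewrite setIC.
    by rewrite le_eqVlt; apply/orP; left; apply/eqP; exact: P0.
apply: filterS2 h (ppos t tT) => w h1 h2 Zw.
by have := h2 (Zte _ Zw); rewrite h1 // ltxx.
Qed.

Lemma QN_of t : (t < T)%N -> QA t -> QN t.
Proof.
move=> tT hA; case: (HES t tT) => iX iY mY eY.
apply: (ae_nonneg P (G := F t)) => //.
- by move=> A; exact: Fm.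
- exact: int_meas iY.
- by move=> A FA; rewrite -hA //; apply: integral_ge0 => w _; rewrite lee_fin.
Qed.

Lemma step t : (t < T)%N -> ((t.+1 < T)%N -> [/\ QA t.+1, QB t.+1, QC t.+1 & QN t.+1]) ->
  [/\ QA t, QB t, QC t & QN t].
Proof.
move=> tT IH.
have FB : F t.+1 [set w | th t.+1 w] := th_F t.+1 tT.
have FBc : F t.+1 (~` [set w | th t.+1 w]).
  by rewrite -gFm; apply: measurableC; rewrite gFm.
have mB := th_m t.+1 tT.
have absT : (T <= t.+1)%N -> forall w, ~ th t.+1 w -> False.
  move=> t1T w; have eT : t.+1 = T by apply/eqP; rewrite eqn_leq tT t1T.
  by rewrite eT => /(_ (thT w)).
have hA : QA t.
  move=> A FA.
  have FA1 : F t.+1 A := Finc _ _ _ (leqnSn t) FA.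
  have mA := Fm _ _ FA.
  case: (HES t tT) => iX iY mY eY.
  rewrite (eY A FA).
  apply: (split_int P mA mB).
  - exact/mS/(measurable_int P)/(Ls_int t (ltnW tT)).
  - exact/mS/(measurable_int P)/iX.
  - apply: eq_integral => w; rewrite inE => -[Aw /= Bw].
    rewrite Sp_S // Bw; congr EFin; apply: indic_iff.
    by have := Ls_S t w tT; rewrite Bw.
  - have FAB : F t.+1 (A `&` ~` [set w | th t.+1 w]).
      by rewrite -gFm; apply: measurableI; rewrite gFm.
    case: (ltnP t.+1 T) => t1T; last first.
      by apply: eq_integral => w; rewrite inE => -[Aw /= Bw]; case: (absT t1T w Bw).
    have [IA _ _ _] := IH t1T.
    transitivity (\int[P]_(w in A `&` ~` [set w | th t.+1 w]) (indic (Ls t.+1) w)%:E)%E.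
      apply: eq_integral => w; rewrite inE => -[Aw /= /negP/negbTE Bw].
      congr EFin; apply: indic_iff.
      by have := Ls_S t w tT; rewrite Bw.
    rewrite IA //; apply: eq_integral => w; rewrite inE => -[Aw /= /negP/negbTE Bw].
    by rewrite Sp_S // Bw.
have hB : QB t.
  move=> A FA.
  have FA1 : F t.+1 A := Finc _ _ _ (leqnSn t) FA.
  have mA := Fm _ _ FA.
  case: (HESV t tT) => iX iY mY eY.
  rewrite (eY A FA).
  apply: (split_int P mA mB).
  - exact/mS/measurable_EFinP/(SP_m t (ltnW tT)).
  - exact/mS/(measurable_int P)/iX.
  - apply: eq_integral => w; rewrite inE => -[Aw /= Bw].
    by rewrite SP_S // MV_S // Bw.
  - have FAB : F t.+1 (A `&` ~` [set w | th t.+1 w]).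
      by rewrite -gFm; apply: measurableI; rewrite gFm.
    have mAB := Fm _ _ FAB.
    case: (ltnP t.+1 T) => t1T; last first.
      by apply: eq_integral => w; rewrite inE => -[Aw /= Bw]; case: (absT t1T w Bw).
    have [_ IB IC _] := IH t1T.
    transitivity (\int[P]_(w in A `&` ~` [set w | th t.+1 w])
                    (stopped_payoff G sigma T th t.+1 w)%:E)%E.
      apply: eq_integral => w; rewrite inE => -[Aw /= /negP/negbTE Bw].
      by rewrite SP_S // Bw.
    rewrite IB //; symmetry.
    case: (HESV t.+1 t1T) => _ iY1 _ _.
    apply: ae_eq_integral => //.
    + exact/mS/(measurable_int P)/iX.
    + exact/mS/(measurable_int P)/iY1.
    apply: filterS IC => w hc [Aw /= Bw].
    have tw : (t.+1 < te w)%N.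
      by rewrite ltnNge; apply/negP => h; apply: Bw; apply: th_ge.
    move/negP/negbTE: Bw => Bw.
    rewrite /= MV_S // Bw; congr EFin.
    by rewrite mulrC divfK //; apply: lt0r_neq0; exact: hc.
have hC : QC t.
  pose Z := [set w | ES t w <= 0] `&` [set w | (t < te w)%N].
  case: (HES t tT) => iX iY mY eY.
  have FZ : F t Z.
    rewrite -gFm; apply: measurableI; rewrite gFm; last exact: te_F.
    have -> : [set w | ES t w <= 0] = ES t @^-1` `]-oo, 0] by apply/seteqP; split => w /=; rewrite in_itv.
    by apply: mY; exact: measurable_itv.
  have mZ := Fm _ _ FZ.
  have hZ : {ae P, forall w, ~ Z w}.
    apply: (@NL t Z tT FZ); first by move=> w [].
    apply: (ae_null P); first by apply: measurableI => //; exact: D_m.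
    have h0 : {ae P, forall w, Z w -> Sp t.+1 w = 0}.
      apply: (L0 P) => //.
      - exact: int_meas iX.
      - case: (ltnP t.+1 T) => t1T.
          have [_ _ _ IN] := IH t1T.
          by apply: filterS IN => w h _; rewrite Sp_S //; case: ifP.
        apply: aeW => w _; rewrite Sp_S //; case: ifP => // Bw.
        by case: (absT t1T w); rewrite Bw.
      - by rewrite -eY //; apply: int_le0 => w [].
    have hpos : {ae P, forall w, Dt t.+1 w -> 0 < Sp t.+1 w}.
      case: (ltnP t.+1 T) => t1T.
        have [_ _ IC _] := IH t1T.
        apply: filterS IC => w hc Dw; rewrite Sp_S //; case: ifP => Bw.
          by rewrite /indic mem_set // ltr01.
        apply: hc; rewrite ltnNge; apply/negP => h.
        by move: Bw; rewrite th_ge.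
      apply: aeW => w Dw; rewrite Sp_S //; case: ifP => Bw.
        by rewrite /indic mem_set // ltr01.
      by case: (absT t1T w); rewrite Bw.
    apply: filterS2 h0 hpos => w h1 h2 [Zw Dw].
    by have := h2 Dw; rewrite h1 // ltxx.
  apply: filterS hZ => w hz tw; rewrite ltNge; apply/negP => ES0.
  by apply: hz; split.
by split => //; exact: QN_of.
Qed.

Lemma claims t : (t < T)%N -> [/\ QA t, QB t, QC t & QN t].
Proof.
have := @down_ind (fun t => (t < T)%N -> [/\ QA t, QB t, QC t & QN t]).
move=> h tT; apply: h (ltnW tT) tT.
  by rewrite ltnn.
by move=> s sT IH _; apply: step.
Qed.


Lemma final : [/\ admissible P F sigma T (Te T p) th,
      (forall t, (t < T)%N ->
         (exists num : Omega -> R,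
            is_cexp P (F t) (stopped_payoff G sigma T th t) num) /\
         (forall num den : Omega -> R,
            is_cexp P (F t) (stopped_payoff G sigma T th t) num ->
            is_cexp P (F t) (indic [set w | lhd (Lt T th t w) (sigma w)]) den ->
            {ae P, forall w, (t < Te T p w)%N ->
                     J t w = num w / den w /\ ES t w = den w})) &
      (forall t, (t <= T)%N ->
         forall q : Omega -> R,
           is_cexp P (F t) (indic [set w | lhd (Lt T th t w) (sigma w)]) q ->
           {ae P, forall w,
              [/\ Dset sigma t w -> ~~ th t w -> Sp t w = q w,
                  Dset sigma t w -> th t w -> Sp t w = 1 &
                  ~ Dset sigma t w -> Sp t w = 0]})].
Proof using HF Hst HGm Hint Hp HES HESV Hrec.
have FM t : F t `<=` measurable by move=> A; exact: Fm.
have cES t : (t < T)%N -> is_cexp P (F t) (indic (Ls t)) (ES t).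
  move=> tT; have [hA _ _ _] := claims t tT.
  case: (HES t tT) => _ iY mY _; split => //; first exact: Ls_int t (ltnW tT).
  by move=> A FA; rewrite hA.
have cESV t : (t < T)%N -> is_cexp P (F t) (stopped_payoff G sigma T th t) (ESV t).
  move=> tT; have [_ hB _ _] := claims t tT.
  case: (HESV t tT) => _ iY mY _; split => //; first exact: SP_int t (ltnW tT).
  by move=> A FA; rewrite hB.
split.
- split.
  + move=> t tT; exact: th_F.
  + move=> t tT; exists (ES t); split; first exact: cES.
    by have [_ _ hC _] := claims t tT.
  + by move=> t w tT h; exact: th_ge.
- move=> t tT; split; first by exists (ESV t); exact: cESV.
  move=> num den Hn Hd.
  have u1 := cexp_uniq (Fsa t) (FM t) Hn (cESV t tT).
  have u2 := cexp_uniq (Fsa t) (FM t) Hd (cES t tT).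
  apply: filterS2 u1 u2 => w e1 e2 tw.
  have [eJ _ _ _] := th_lt t w (ltnW tT) tw.
  by rewrite eJ e1 e2.
- move=> t tT q Hq.
  case: (ltnP t T) => tT'; last first.
    have eT : t = T by apply/eqP; rewrite eqn_leq tT tT'.
    subst t; apply: aeW => w.
    have := Hrec T w (leqnn T); rewrite ltnNge te_le /= => -[_ ->].
    split.
    * by move=> _ /negP; case; exact: thT.
    * by move=> Dw _; rewrite /indic mem_set.
    * by move=> Dw; rewrite /indic memNset.
  have u := cexp_uniq (Fsa t) (FM t) (cES t tT') Hq.
  pose Z := ~` Dt t `&` [set w | (t < te w)%N].
  have FZ : F t Z.
    rewrite -gFm; apply: measurableI; rewrite gFm; [exact: Hst|exact: te_F].
  have nZ : {ae P, forall w, ~ Z w}.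
    apply: (@NL t Z tT' FZ); first by move=> w [].
    have -> : Z `&` Dt t.+1 = set0.
      apply/seteqP; split => w // [[nD _] D1]; apply: nD.
      move: D1; rewrite /Dt /Dset /=; case: (sigma w) => //= b.
      exact: ltnW.
    exact: measure0.
  apply: filterS2 u nZ => w e hz; split.
  + move=> Dw nth.
    have tw : (t < te w)%N.
      by rewrite ltnNge; apply/negP => h; move/negP: nth; apply; exact: th_ge.
    have [_ _ _ h2] := th_lt t w tT tw.
    by rewrite (h2 nth).2 e.
  + move=> Dw tht; case: (ltnP t (te w)) => tw.
      by have [_ _ h1 _] := th_lt t w tT tw; rewrite (h1 tht).2.
    have := Hrec t w tT; rewrite ltnNge tw /= => -[_ ->].
    by rewrite /indic mem_set.
  + move=> nD; case: (ltnP t (te w)) => tw.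
      by case: hz; split.
    have := Hrec t w tT; rewrite ltnNge tw /= => -[_ ->].
    by rewrite /indic memNset.
Qed.

End Main.

Theorem lemma3p2 (R : realType) (d : measure_display) (Omega : measurableType d)
  (P : probability Omega R) (F : nat -> set (set Omega)) (T : nat)
  (sigma : Omega -> option nat) (G : nat -> Omega -> R)
  (p : nat -> Omega -> R) (ES ESV J Sp : nat -> Omega -> R)
  (V : nat -> Omega -> option R) :
  filtration F ->
  (forall A, F 0%N A -> A = set0 \/ A = setT) ->
  stopping_time F sigma ->
  P (Dset sigma 0) = 1%E ->
  (forall t (B : set R), (t <= T)%N -> measurable B ->
     F t (Dset sigma t `&` G t @^-1` B)) ->
  (\int[P]_w (\big[Num.max/0]_(t < T.+1) (`|G t w| * indic (Dset sigma t) w))%:E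
     < +oo)%E ->
  (* p t : a version of P(D_{t+1} | F_t), defining T_e *)
  (forall t, (t < T)%N -> is_cexp P (F t) (indic (Dset sigma t.+1)) (p t)) ->
  (* ES t, ESV t : versions of E[S_{t+1} | F_t] and E[S_{t+1} V_{t+1} | F_t] *)
  (forall t, (t < T)%N -> is_cexp P (F t) (Sp t.+1) (ES t)) ->
  (forall t, (t < T)%N ->
     is_cexp P (F t) (fun w => mulD (Sp t.+1 w) (V t.+1 w)) (ESV t)) ->
  (* the backward recursion *)
  (forall t w, (t <= T)%N ->
     if (t < Te T p w)%N then
       J t w = ESV t w / ES t w /\
       (if geD (Gv G sigma t w) (Some (J t w))
        then V t w = Gv G sigma t w /\ Sp t w = 1
        else V t w = Some (J t w) /\ Sp t w = ES t w)
     else V t w = Gv G sigma t w /\ Sp t w = indic (Dset sigma t) w) ->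
  let theta := fun t w => geD (Gv G sigma t w) (V t w) in
  [/\ admissible P F sigma T (Te T p) theta,
      (forall t, (t < T)%N ->
         (exists num : Omega -> R,
            is_cexp P (F t) (stopped_payoff G sigma T theta t) num) /\
         (forall num den : Omega -> R,
            is_cexp P (F t) (stopped_payoff G sigma T theta t) num ->
            is_cexp P (F t) (indic [set w | lhd (Lt T theta t w) (sigma w)]) den ->
            {ae P, forall w, (t < Te T p w)%N ->
                     J t w = num w / den w /\ ES t w = den w})) &
      (forall t, (t <= T)%N ->
         forall q : Omega -> R,
           is_cexp P (F t) (indic [set w | lhd (Lt T theta t w) (sigma w)]) q ->
           {ae P, forall w,
              [/\ Dset sigma t w -> ~~ theta t w -> Sp t w = q w,
                  Dset sigma t w -> theta t w -> Sp t w = 1 &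
                  ~ Dset sigma t w -> Sp t w = 0]})].
Proof.
move=> HF _ Hst _ HGm Hint Hp HES HESV Hrec theta.
exact: (@final R d Omega P F T sigma G p ES ESV J Sp V HF Hst HGm Hint Hp HES HESV Hrec).
Qed.
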